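(* Let $M_f$ and $M_g$ be (extended) merge trees and $\varepsilon>0$. If there exists an $\varepsilon$-good map $\alpha^\varepsilon: M_f\to M_g$, then for every $\varepsilon'>\varepsilon$ there also exists an $\varepsilon'$-good map $\alpha^{\varepsilon'}: M_f\to M_g$.
   Context: An (extended) merge tree is a finite rooted tree, regarded as a topological space, with an infinite ray attached at its root, together with a continuous height function ($\tilde f$ on $M_f$, $\tilde g$ on $M_g$) that is strictly increasing along every edge toward the root and tends to $+\infty$ along the ray. For points $x,x'$ of a merge tree, $x'\succeq x$ means $x'$ lies on the unique upward path from $x$. For $\delta\ge0$, $i^\delta: M_f\to M_f$ sends $x$ to its unique ancestor with $\tilde f$-value $\tilde f(x)+\delta$; $j^\delta$ on $M_g$ is analogous. For $\varepsilon>0$, a continuous map $\alpha: M_f\to M_g$ is $\varepsilon$-good if: (a) (Range-Shift) $\tilde g(\alpha(v))=\tilde f(v)+\varepsilon$ for all $v\in M_f$; (b) (Ancestor-Shift) for all $v_1,v_2\in M_f$, $\alpha(v_1)\succeq\alpha(v_2)$ implies $i^{2\varepsilon}(v_1)\succeq i^{2\varepsilon}(v_2)$; (c) (Ancestor-Closeness) for every $w\in M_g\setminus\mathrm{Im}(\alpha)$ and its nearest ancestor $w^a\in\mathrm{Im}(\alpha)$, $|\tilde g(w^a)-\tilde g(w)|\le 2\varepsilon$. *)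

(* Defs.v *)
From mathcomp Require Import ssreflect ssrfun ssrbool eqtype ssrnat fintype.
From Stdlib Require Import Reals.

Set Implicit Arguments.
Unset Strict Implicit.

(* The geometric tree (with the infinite ray
   attached at the root) is described by its points below, and the height
   function on each edge is taken as the parameter of the edge (any
   continuous strictly increasing height function on an edge is a
   homeomorphism onto its range, so this is no loss of generality). *)
Record mtree := MTree {
  mt_V : finType;
  mt_par : mt_V -> mt_V;
  mt_root : mt_V;
  mt_ht : mt_V -> R;
  mt_par_root : mt_par mt_root = mt_root;
  mt_reach : forall v, exists n, iter n mt_par v = mt_root;
  mt_ht_par : forall v, v <> mt_root -> (mt_ht v < mt_ht (mt_par v))%R
}.

Definition vanc (T : mtree) (v w : mt_V T) : Prop :=
  exists n, iter n (@mt_par T) v = w.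

(* A point of the geometric merge tree: a point at height [pt_h] on the
   half-open edge from vertex [pt_v] up to its parent (or on the ray above
   the root, if pt_v is the root). *)
Record point (T : mtree) := Point {
  pt_v : mt_V T;
  pt_h : R;
  pt_ok : (mt_ht pt_v <= pt_h)%R /\
          (pt_v = mt_root T \/ (pt_h < mt_ht (mt_par pt_v))%R)
}.

Definition height (T : mtree) (x : point T) : R := pt_h x.

Definition succeq (T : mtree) (x' x : point T) : Prop :=
  vanc (pt_v x) (pt_v x') /\ (pt_h x <= pt_h x')%R.

(* i^delta(x) = y : y is the ancestor of x at height f(x) + delta
   (it exists and is unique; stated relationally). *)
Definition shift_to (T : mtree) (delta : R) (x y : point T) : Prop :=
  succeq y x /\ height y = (height x + delta)%R.

(* The tree (path) metric: d(x,y) = min over common ancestors z of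
   (f z - f x) + (f z - f y).  [tnear x y r] means d(x,y) < r. *)
Definition tnear (T : mtree) (x y : point T) (r : R) : Prop :=
  exists z, succeq z x /\ succeq z y /\
            (2 * height z - height x - height y < r)%R.

(* Continuity with respect to the topology of the geometric tree (which is
   the metric topology of the tree path metric). *)
Definition tcontinuous (T1 T2 : mtree) (a : point T1 -> point T2) : Prop :=
  forall x (e : R), (0 < e)%R ->
    exists d : R, (0 < d)%R /\ forall y, tnear x y d -> tnear (a x) (a y) e.

Definition in_image (T1 T2 : mtree) (a : point T1 -> point T2) (w : point T2)
  : Prop := exists v, a v = w.

Definition nearest_anc_in_image (T1 T2 : mtree) (a : point T1 -> point T2)
  (w wa : point T2) : Prop :=
  succeq wa w /\ in_image a wa /\
  forall z, in_image a z -> succeq z w -> succeq z wa.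

Definition good_map (Tf Tg : mtree) (eps : R) (a : point Tf -> point Tg)
  : Prop :=
  tcontinuous a /\
  (forall v, height (a v) = (height v + eps)%R) /\
  (forall v1 v2, succeq (a v1) (a v2) ->
     forall u1 u2, shift_to (2 * eps) v1 u1 -> shift_to (2 * eps) v2 u2 ->
       succeq u1 u2) /\
  (forall w, ~ in_image a w -> forall wa, nearest_anc_in_image a w wa ->
     (Rabs (height wa - height w) <= 2 * eps)%R).

(* Main.v *)
Require Import Defs.
From Stdlib Require Import Reals.
From mathcomp Require Import ssreflect ssrfun ssrbool eqtype ssrnat fintype seq.
From Stdlib Require Import Lra ClassicalEpsilon ProofIrrelevance Classical.
Local Open Scope R_scope.
Set Implicit Arguments.
Unset Strict Implicit.

Lemma iter_root (T : mtree) n : iter n (@mt_par T) (mt_root T) = mt_root T.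
Proof. elim: n => [|n IH] //=. by rewrite IH mt_par_root. Qed.

Lemma ht_iter (T : mtree) k (w : mt_V T) : mt_ht w <= mt_ht (iter k (@mt_par T) w).
Proof.
elim: k => [|k IH] /=; first lra.
destruct (classic (iter k (@mt_par T) w = mt_root T)) as [E|E].
- rewrite E mt_par_root -E; exact IH.
- have := mt_ht_par E. lra.
Qed.

Lemma iter_ne (T : mtree) n (u : mt_V T) : iter n (@mt_par T) u <> u ->
  u <> mt_root T /\ mt_ht (mt_par u) <= mt_ht (iter n (@mt_par T) u).
Proof.
case: n => [|n] H; first by [].
split.
- move=> Eu; subst u; apply: H; by rewrite iter_root.
- rewrite iterSr; apply ht_iter.
Qed.

Lemma iter_plus (T : mtree) k n (u : mt_V T) :
  iter (k + n)%coq_nat (@mt_par T) u = iter k (@mt_par T) (iter n (@mt_par T) u).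
Proof. induction k as [|k IH]; simpl; [done| by rewrite IH]. Qed.

Lemma vanc_refl (T : mtree) (u : mt_V T) : vanc u u.
Proof. by exists 0%nat. Qed.

Lemma vanc_trans (T : mtree) (u v w : mt_V T) : vanc u v -> vanc v w -> vanc u w.
Proof. move=> [n <-] [m <-]. exists (m + n)%coq_nat. by rewrite iter_plus. Qed.

Lemma vanc_antisym (T : mtree) (u w : mt_V T) : vanc u w -> vanc w u -> u = w.
Proof.
move=> [n Hn] [m Hm].
destruct (classic (u = w)) as [E|E]; first done.
have H1 : iter n (@mt_par T) u <> u by rewrite Hn; auto.
have H2 : iter m (@mt_par T) w <> w by rewrite Hm; auto.
have [A1 B1] := iter_ne H1. have [A2 B2] := iter_ne H2.
rewrite Hn in B1. rewrite Hm in B2.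
have := mt_ht_par A1. have := mt_ht_par A2.
have := ht_iter n u. have := ht_iter m w. lra.
Qed.

Lemma point_eq (T : mtree) (x y : point T) : pt_v x = pt_v y -> pt_h x = pt_h y -> x = y.
Proof.
destruct x as [v h p], y as [v' h' p']; simpl; move=> E1 E2; subst.
by have -> : p = p' by apply proof_irrelevance.
Qed.

Lemma succ_refl (T : mtree) (x : point T) : succeq x x.
Proof. split; [apply vanc_refl| lra]. Qed.

Lemma succ_trans (T : mtree) (x y z : point T) : succeq z y -> succeq y x -> succeq z x.
Proof. move=> [A B] [C D]; split; [exact: vanc_trans C A | lra]. Qed.

Lemma succ_h (T : mtree) (x y : point T) : succeq y x -> pt_h x <= pt_h y.
Proof. by case. Qed.

Lemma succ_comp (T : mtree) (x y z : point T) :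
  succeq y x -> succeq z x -> pt_h y <= pt_h z -> succeq z y.
Proof.
move=> [[n Hn] _] [[m Hm] _] hyz.
split; last done.
destruct (Nat.le_ge_cases n m) as [L|L].
- destruct (Nat.le_exists_sub _ _ L) as [k [Ek _]].
  exists k. rewrite -Hm -Hn Ek. by rewrite iter_plus.
- destruct (Nat.le_exists_sub _ _ L) as [k [Ek _]].
  have Hy : pt_v y = iter k (@mt_par T) (pt_v z) by rewrite -Hn -Hm Ek iter_plus.
  destruct (classic (pt_v y = pt_v z)) as [E|E]; first by rewrite E; apply vanc_refl.
  exfalso.
  have H1 : iter k (@mt_par T) (pt_v z) <> pt_v z by rewrite -Hy.
  have [A B] := iter_ne H1. rewrite -Hy in B.
  have := pt_ok y. have := pt_ok z. case=> _ [//|Hz]. lra.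
Qed.

Lemma succ_uniq (T : mtree) (x y z : point T) :
  succeq y x -> succeq z x -> pt_h y = pt_h z -> y = z.
Proof.
move=> H1 H2 E.
have A : succeq z y by apply: succ_comp H1 H2 _; lra.
have B : succeq y z by apply: succ_comp H2 H1 _; lra.
apply point_eq; last done.
apply vanc_antisym; [exact A.1| exact B.1].
Qed.

Lemma shift_ex_aux (T : mtree) n : forall (v : mt_V T) (h h' : R),
  iter n (@mt_par T) v = mt_root T -> mt_ht v <= h ->
  (v = mt_root T \/ h < mt_ht (mt_par v)) -> h <= h' ->
  exists y : point T, vanc v (pt_v y) /\ pt_h y = h'.
Proof.
have Hroot : forall (v : mt_V T) h h', v = mt_root T -> mt_ht v <= h -> h <= h' ->
    exists y : point T, vanc v (pt_v y) /\ pt_h y = h'.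
  move=> v h h' Ev H1 H2.
  have ok : mt_ht v <= h' /\ (v = mt_root T \/ h' < mt_ht (mt_par v)) by split; [lra| left].
  exists (Point ok); split; [apply vanc_refl| done].
induction n as [|n IH]; move=> v h h' Hr H1 H2 H3.
- exact: Hroot Hr H1 H3.
- destruct (classic (v = mt_root T)) as [Ev|Ev]; first exact: Hroot Ev H1 H3.
  destruct (Rlt_dec h' (mt_ht (mt_par v))) as [L|L].
  + have ok : mt_ht v <= h' /\ (v = mt_root T \/ h' < mt_ht (mt_par v)) by split; [lra| right].
    exists (Point ok); split; [apply vanc_refl| done].
  + have Hr' : iter n (@mt_par T) (mt_par v) = mt_root T by rewrite -iterSr.
    have Hok : mt_par v = mt_root T \/ mt_ht (mt_par v) < mt_ht (mt_par (mt_par v)).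
      destruct (classic (mt_par v = mt_root T)) as [E|E]; [by left| right; exact: mt_ht_par].
    have [y [Hy1 Hy2]] := IH (mt_par v) (mt_ht (mt_par v)) h' Hr' (Rle_refl _) Hok ltac:(lra).
    exists y; split; last done.
    apply: vanc_trans Hy1. by exists 1%nat.
Qed.

Lemma shift_ex (T : mtree) (x : point T) s : 0 <= s -> exists y, shift_to s x y.
Proof.
move=> Hs.
have [n Hn] := mt_reach (pt_v x).
have [H1 H2] := pt_ok x.
have [y [Hy1 Hy2]] := shift_ex_aux Hn H1 H2 (h' := pt_h x + s) ltac:(lra).
exists y. split; [split; [done| lra]| ].
rewrite /height Hy2 //.
Qed.

Definition shift (T : mtree) (x : point T) (s : R) : point T :=
  epsilon (inhabits x) (fun y => 0 <= s -> shift_to s x y).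

Lemma shift_spec (T : mtree) (x : point T) s : 0 <= s -> shift_to s x (shift x s).
Proof.
move=> Hs. rewrite /shift.
apply (epsilon_spec (inhabits x) (fun y => 0 <= s -> shift_to s x y)); last exact Hs.
have [y Hy] := shift_ex x Hs. by exists y.
Qed.

Lemma shift_succ (T : mtree) (x : point T) s : 0 <= s -> succeq (shift x s) x.
Proof. move=> Hs. exact: (shift_spec x Hs).1. Qed.

Lemma shift_h (T : mtree) (x : point T) s : 0 <= s -> pt_h (shift x s) = pt_h x + s.
Proof. move=> Hs. exact: (shift_spec x Hs).2. Qed.

Lemma shift0 (T : mtree) (x : point T) : shift x 0 = x.
Proof.
apply: (succ_uniq (shift_succ x (Rle_refl 0)) (succ_refl x)).
rewrite shift_h; [lra| lra].
Qed.

Lemma shift_eq (T : mtree) (x y : point T) s : 0 <= s -> succeq y x ->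
  pt_h y = pt_h x + s -> shift x s = y.
Proof.
move=> Hs H E. apply: (succ_uniq (shift_succ x Hs) H). rewrite shift_h //.
Qed.

Lemma gap (T : mtree) (a : point T) : exists g, 0 < g /\
  (pt_v a = mt_root T \/ pt_h a + g <= mt_ht (mt_par (pt_v a))).
Proof.
have [_ [E|E]] := pt_ok a.
- exists 1; split; [lra| by left].
- exists (mt_ht (mt_par (pt_v a)) - pt_h a); split; [lra| right; lra].
Qed.

Lemma gapV (T : mtree) (a b : point T) g :
  (pt_v a = mt_root T \/ pt_h a + g <= mt_ht (mt_par (pt_v a))) ->
  succeq b a -> pt_h b < pt_h a + g -> pt_v b = pt_v a.
Proof.
move=> Hg [[n Hn] _] Hb.
destruct (classic (pt_v b = pt_v a)) as [E|E]; first done.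
exfalso.
have H1 : iter n (@mt_par T) (pt_v a) <> pt_v a by rewrite Hn.
have [A B] := iter_ne H1. rewrite Hn in B.
have := (pt_ok b).1. case: Hg => [//|Hg]. lra.
Qed.

Lemma near_same (T : mtree) (a b : point T) g e :
  (pt_v a = mt_root T \/ pt_h a + g <= mt_ht (mt_par (pt_v a))) -> e <= g ->
  tnear a b e -> pt_h a <= pt_h b -> pt_v b = pt_v a.
Proof.
move=> Hg Heg [z [Hza [Hzb Hz]]] Hab.
have hza := succ_h Hza. have hzb := succ_h Hzb.
rewrite /height in Hz.
have Ez : pt_v z = pt_v a by apply: gapV Hg Hza _; lra.
have [[n Hn] _] := Hzb. rewrite Ez in Hn.
destruct (classic (pt_v b = pt_v a)) as [E|E]; first done.
exfalso.
have H1 : iter n (@mt_par T) (pt_v b) <> pt_v b by rewrite Hn; auto.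
have [A B] := iter_ne H1. rewrite Hn in B.
have := (pt_ok a).1. have := pt_ok b. case=> _ [//|Hb]. lra.
Qed.

Lemma near_le (T : mtree) (a b : point T) g e :
  (pt_v a = mt_root T \/ pt_h a + g <= mt_ht (mt_par (pt_v a))) -> e <= g ->
  tnear a b e -> pt_h b <= pt_h a -> succeq a b.
Proof.
move=> Hg Heg [z [Hza [Hzb Hz]]] Hab.
have hza := succ_h Hza. have hzb := succ_h Hzb.
rewrite /height in Hz.
have Ez : pt_v z = pt_v a by apply: gapV Hg Hza _; lra.
have [Hv _] := Hzb. rewrite Ez in Hv. by split.
Qed.

Lemma near_ge (T : mtree) (a b : point T) g e :
  (pt_v a = mt_root T \/ pt_h a + g <= mt_ht (mt_par (pt_v a))) -> e <= g ->
  tnear a b e -> pt_h a <= pt_h b -> succeq b a.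
Proof.
move=> Hg Heg Hn Hab. have E := near_same Hg Heg Hn Hab.
split; [rewrite E; apply vanc_refl| done].
Qed.

Lemma high_root (T : mtree) (x : point T) : mt_ht (mt_root T) <= pt_h x -> pt_v x = mt_root T.
Proof.
move=> H. destruct (classic (pt_v x = mt_root T)) as [E|E]; first done.
exfalso. have [n Hn] := mt_reach (pt_v x).
have H1 : iter n (@mt_par T) (pt_v x) <> pt_v x by rewrite Hn; auto.
have [A B] := iter_ne H1. rewrite Hn in B.
have := pt_ok x. case=> _ [//|Hb]. lra.
Qed.

Lemma lub_approx (E : R -> Prop) c s : is_lub E c -> s < c -> exists t, E t /\ s < t.
Proof.
move=> [Hub Hl] Hs.
apply: NNPP => N.
have : c <= s.
  apply: Hl => t Et. destruct (Rle_dec t s) as [L|L]; first done.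
  exfalso; apply: N; exists t; split; [done| lra].
lra.
Qed.

Lemma shift_mono (T : mtree) (x : point T) s t : 0 <= s -> s <= t ->
  succeq (shift x t) (shift x s).
Proof.
move=> Hs Hst. apply: succ_comp (shift_succ x Hs) (shift_succ x _) _; first lra.
rewrite !shift_h; lra.
Qed.

Lemma shift_near (T : mtree) (x : point T) s t d : 0 <= s -> 0 <= t ->
  Rabs (t - s) < d -> tnear (shift x t) (shift x s) d.
Proof.
move=> Hs Ht Hd.
destruct (Rle_dec s t) as [L|L].
- exists (shift x t). split; [apply succ_refl| split; first exact: shift_mono].
  rewrite /height !shift_h //. rewrite Rabs_pos_eq in Hd; lra.
- exists (shift x s). split; [apply shift_mono; lra| split; first apply succ_refl].
  rewrite /height !shift_h //. rewrite Rabs_left in Hd; lra.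
Qed.

Lemma mono (Tf Tg : mtree) (a : point Tf -> point Tg) eps :
  tcontinuous a -> (forall v, height (a v) = height v + eps) ->
  forall x D, 0 <= D -> succeq (a (shift x D)) (a x).
Proof.
move=> Hc Hr x D HD.
pose P s := succeq (a (shift x s)) (a x).
have P0 : P 0 by rewrite /P shift0; apply succ_refl.
have Hh : forall s, 0 <= s -> pt_h (a (shift x s)) = pt_h x + s + eps.
  move=> s Hs. have := Hr (shift x s). rewrite /height shift_h //.
pose E t := 0 <= t <= D /\ forall s, 0 <= s <= t -> P s.
have [c Hc'] : {c | is_lub E c}.
  apply completeness.
  - exists D => t [Ht _]; lra.
  - exists 0; split; [lra| move=> s Hs; have -> : s = 0 by lra]; exact P0.
have c0 : 0 <= c by apply Hc'.1; split; [lra| move=> s Hs; have -> : s = 0 by lra]; exact P0.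
have cD : c <= D by apply Hc'.2 => t [Ht _]; lra.
have A : forall s, 0 <= s < c -> P s.
  move=> s Hs. have [t [[_ Et] st]] := lub_approx Hc' (proj2 Hs). apply Et; lra.
have [g [g0 Hg]] := gap (a (shift x c)).
have [d [d0 Hd]] := Hc (shift x c) g g0.
have Pc : P c.
  destruct (Rlt_dec 0 c) as [L|L]; last by have -> : c = 0 by lra.
  pose s := Rmax 0 (c - d/2).
  have s0 : 0 <= s by apply Rmax_l.
  have sc : s < c by apply Rmax_lub_lt; lra.
  have sd : c - d/2 <= s by apply Rmax_r.
  have Hab : Rabs (c - s) < d by rewrite Rabs_pos_eq; lra.
  have Hn := Hd _ (shift_near x s0 c0 Hab).
  have := near_le Hg (Rle_refl g) Hn. rewrite !Hh //. move=> H.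
  apply: succ_trans (H ltac:(lra)) (A s ltac:(lra)).
have Hge : forall s, c <= s -> s < c + d -> P s.
  move=> s L1 L2.
  have Hab : Rabs (c - s) < d by rewrite Rabs_left1; lra.
  have Hn := Hd _ (shift_near x (Rle_trans _ _ _ c0 L1) c0 Hab).
  have := near_ge Hg (Rle_refl g) Hn. rewrite !Hh //; [|lra]. move=> H.
  apply: succ_trans (H ltac:(lra)) Pc.
have cDe : c = D.
  apply: NNPP => N.
  pose c' := Rmin D (c + d/2).
  have : E c'.
    split; first by split; [apply Rmin_glb; lra| apply Rmin_l].
    move=> s Hs. destruct (Rlt_dec s c) as [L|L]; first by apply A; lra.
    apply Hge; first lra. have := Rmin_r D (c + d/2). rewrite -/c'. lra.
  move/(Hc'.1). have : c < c' by apply Rmin_glb_lt; lra. lra.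
by rewrite -cDe.
Qed.

Lemma up_closed (Tf Tg : mtree) (a : point Tf -> point Tg) eps :
  tcontinuous a -> (forall v, height (a v) = height v + eps) ->
  forall (w : point Tg) t t', 0 <= t -> t <= t' ->
  in_image a (shift w t) -> in_image a (shift w t').
Proof.
move=> Hc Hr w t t' Ht Htt' [v Hv].
exists (shift v (t' - t)).
have Hm := mono Hc Hr v (D:=t' - t) ltac:(lra).
rewrite Hv in Hm.
symmetry; apply: shift_eq; first lra.
- exact: succ_trans Hm (shift_succ w Ht).
- have := Hr (shift v (t' - t)). have := Hr v. rewrite Hv /height !shift_h //; lra.
Qed.

Lemma image_above (Tf Tg : mtree) (a : point Tf -> point Tg) eps :
  tcontinuous a -> (forall v, height (a v) = height v + eps) ->
  forall (w : point Tg), exists t, 0 <= t /\ in_image a (shift w t).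
Proof.
move=> Hc Hr w.
have ok : mt_ht (mt_root Tf) <= mt_ht (mt_root Tf) /\
   (mt_root Tf = mt_root Tf \/ mt_ht (mt_root Tf) < mt_ht (mt_par (mt_root Tf))) by split; [lra| left].
pose v0 := Point ok.
pose H := Rmax (Rmax (pt_h (a v0)) (pt_h w)) (mt_ht (mt_root Tg)).
have H1 : pt_h (a v0) <= H by rewrite /H; apply: Rle_trans (Rmax_l _ _); apply Rmax_l.
have H2 : pt_h w <= H by rewrite /H; apply: Rle_trans (Rmax_l _ _); apply Rmax_r.
have H3 : mt_ht (mt_root Tg) <= H by apply Rmax_r.
exists (H - pt_h w); split; first lra.
exists (shift v0 (H - pt_h (a v0))).
have Hm := mono Hc Hr v0 (D:=H - pt_h (a v0)) ltac:(lra).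
have hv := Hr (shift v0 (H - pt_h (a v0))). have hv0 := Hr v0.
rewrite /height shift_h in hv; last lra.
rewrite /height in hv0.
have E1 : pt_h (a (shift v0 (H - pt_h (a v0)))) = H by lra.
have E2 : pt_h (shift w (H - pt_h w)) = H by rewrite shift_h; lra.
apply point_eq; last by rewrite E1 E2.
rewrite !high_root //; lra.
Qed.

Lemma closed_img (Tf Tg : mtree) (a : point Tf -> point Tg) eps :
  tcontinuous a -> (forall v, height (a v) = height v + eps) ->
  forall (w : point Tg) t0, 0 <= t0 ->
  (forall t, t0 < t -> in_image a (shift w t)) -> in_image a (shift w t0).
Proof.
move=> Hc Hr w t0 Ht0 Hall.
pose F (u : mt_V Tf) t := t0 < t /\ exists v, a v = shift w t /\ pt_v v = u.
have [u Hu] : exists u, forall r, t0 < r -> exists t, t < r /\ F u t.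
  apply: NNPP => N.
  have N' : forall u, exists r, t0 < r /\ forall t, t < r -> ~ F u t.
    move=> u. apply: NNPP => N2. apply: N. exists u => r Hr'.
    apply: NNPP => N3. apply: N2. exists r; split; first done.
    move=> t Ht Ft. apply: N3. by exists t.
  have L : forall l : seq (mt_V Tf), exists r, t0 < r /\
      forall u, u \in l -> forall t, t < r -> ~ F u t.
    elim=> [|u l [r [Hr0 Hl]]].
    - exists (t0 + 1); split; [lra| done].
    - have [r' [Hr'0 Hr']] := N' u.
      exists (Rmin r r'); split; first by apply Rmin_glb_lt.
      move=> u'; rewrite in_cons => /orP [/eqP ->|Hin] t Ht.
      + apply: Hr'. have := Rmin_r r r'. lra.
      + apply: (Hl u' Hin t). have := Rmin_l r r'. lra.
  have [r [Hr0 Hl]] := L (enum (mt_V Tf)).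
  have [v Hv] := Hall ((t0 + r) / 2) ltac:(lra).
  apply: (Hl (pt_v v) _ ((t0 + r) / 2)); first by rewrite mem_enum.
  - lra.
  - split; first lra. by exists v.
have Hhv : forall t v, 0 <= t -> a v = shift w t -> pt_h v = pt_h w + t - eps.
  move=> t v Ht Hv. have := Hr v. rewrite Hv /height shift_h //. lra.
pose hs := pt_h w + t0 - eps.
have ok1 : mt_ht u <= hs.
  apply: NNPP => /Rnot_le_lt N.
  have [t [Ht [Htt0 [v [Hv Hvu]]]]] := Hu (t0 + (mt_ht u - hs)) ltac:(lra).
  have := Hhv t v ltac:(lra) Hv. have := (pt_ok v).1. rewrite Hvu. rewrite /hs in N Ht *. lra.
have ok2 : u = mt_root Tf \/ hs < mt_ht (mt_par u).
  destruct (classic (u = mt_root Tf)) as [E|E]; [by left| right].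
  have [t [Ht [Htt0 [v [Hv Hvu]]]]] := Hu (t0 + 1) ltac:(lra).
  have := Hhv t v ltac:(lra) Hv. have := (pt_ok v).2. rewrite Hvu. case=> [//|H]. rewrite /hs. lra.
pose vs := Point (conj ok1 ok2).
exists vs.
have Hvs : pt_h (a vs) = pt_h w + t0 by have := Hr vs; rewrite /height /=; rewrite /hs; lra.
have [g [g0 Hg]] := gap (a vs).
have [d [d0 Hd]] := Hc vs g g0.
pose y0 := shift w t0.
have [gy [gy0 Hgy]] := gap y0.
have [t [Ht [Htt0 [v [Hv Hvu]]]]] := Hu (t0 + Rmin d gy) ltac:(have := Rmin_glb_lt d gy 0 d0 gy0; lra).
have hv := Hhv t v ltac:(lra) Hv.
have Hnear : tnear vs v d.
  exists v; split; last split; first split.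
  - by rewrite Hvu; apply vanc_refl.
  - rewrite /= /hs; lra.
  - apply succ_refl.
  - rewrite /height /= /hs. have := Rmin_l d gy. lra.
have Hn := Hd v Hnear.
have E1 := near_same Hg (Rle_refl g) Hn ltac:(rewrite Hv Hvs shift_h; lra).
have Hyt : succeq (shift w t) y0 by apply shift_mono; lra.
have E2 := gapV Hgy Hyt ltac:(rewrite /y0 !shift_h; try lra; have := Rmin_r d gy; lra).
apply point_eq.
- rewrite -E1 Hv E2 //.
- rewrite Hvs shift_h //.
Qed.

Unset Implicit Arguments.

Theorem lemma4p2 (Mf Mg : mtree) (eps : R) :
  (0 < eps)%R ->
  (exists a : point Mf -> point Mg, good_map eps a) ->
  forall eps' : R, (eps < eps')%R ->
    exists a' : point Mf -> point Mg, good_map eps' a'.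
Proof.
move=> Heps [a [Hc [Hr [Hb Hcl]]]] eps' Heps'.
pose dl := eps' - eps.
have dl0 : 0 <= dl by rewrite /dl; lra.
exists (fun v => shift (a v) dl).
have Hr' : forall v, pt_h (shift (a v) dl) = pt_h v + eps'.
  move=> v. rewrite shift_h //. have := Hr v. rewrite /height /dl. lra.
have Hcomm : forall v, a (shift v dl) = shift (a v) dl.
  move=> v. symmetry. apply: shift_eq => //.
  - exact: (mono Hc Hr v dl0).
  - have := Hr (shift v dl). have := Hr v. rewrite /height shift_h //. lra.
split; last split; last split.
- move=> x e e0. have [d [d0 Hd]] := Hc x e e0. exists d; split => // y Hy.
  have [z [Hzx [Hzy Hz]]] := Hd y Hy.
  exists (shift z dl). split; last split.
  + apply: succ_comp (shift_succ (a x) dl0) (succ_trans (shift_succ z dl0) Hzx) _.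
    rewrite !shift_h //. have := succ_h Hzx. lra.
  + apply: succ_comp (shift_succ (a y) dl0) (succ_trans (shift_succ z dl0) Hzy) _.
    rewrite !shift_h //. have := succ_h Hzy. lra.
  + rewrite /height !shift_h //. rewrite /height in Hz. lra.
- move=> v; rewrite /height; apply Hr'.
- move=> v1 v2 H u1 u2 [Hu1 Eu1] [Hu2 Eu2]. rewrite -!Hcomm in H.
  have Hs1 := shift_spec (shift v1 dl) (s := 2 * eps) ltac:(lra).
  have Hs2 := shift_spec (shift v2 dl) (s := 2 * eps) ltac:(lra).
  have Hw := Hb _ _ H _ _ Hs1 Hs2.
  have hw := succ_h Hw. rewrite !shift_h in hw; try lra.
  have W1 : succeq (shift (shift v1 dl) (2 * eps)) v1.
    apply: succ_trans (shift_succ _ _) (shift_succ _ dl0); lra.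
  have W2 : succeq (shift (shift v2 dl) (2 * eps)) v2.
    apply: succ_trans (shift_succ _ _) (shift_succ _ dl0); lra.
  rewrite /height in Eu1 Eu2.
  have U1 : succeq u1 (shift (shift v1 dl) (2 * eps)).
    apply: succ_comp W1 Hu1 _. rewrite !shift_h /dl; lra.
  have U2 : succeq u2 (shift (shift v2 dl) (2 * eps)).
    apply: succ_comp W2 Hu2 _. rewrite !shift_h /dl; lra.
  apply: succ_comp U2 (succ_trans U1 Hw) _. lra.
- move=> w Hni wa [Hwa [Hwai Hwamin]].
  rewrite /height Rabs_pos_eq; last by have := succ_h Hwa; lra.
  suff [y [Hyi [Hyw Hyh]]] : exists y, in_image a y /\ succeq y w /\ pt_h y <= pt_h w + 2*eps.
    have [v Hv] := Hyi.
    have Hin : in_image (fun v => shift (a v) dl) (shift y dl) by exists v; rewrite Hv.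
    have Hs := Hwamin _ Hin (succ_trans (shift_succ y dl0) Hyw).
    have := succ_h Hs. rewrite shift_h //. rewrite /dl. lra.
  destruct (classic (in_image a w)) as [Hw|Hw].
  + exists w; split => //; split; [apply succ_refl| lra].
  + pose B t := 0 <= t /\ ~ in_image a (shift w t).
    have [t1 [t10 Ht1]] := image_above Hc Hr w.
    have [t0 Hlub] : {t0 | is_lub B t0}.
      apply completeness.
      - exists t1 => t [Ht Hn]. apply: NNPP => /Rnot_le_lt L. apply: Hn.
        exact: (up_closed Hc Hr t10 (Rlt_le _ _ L) Ht1).
      - exists 0; split; [lra| by rewrite shift0].
    have t00 : 0 <= t0 by apply Hlub.1; split; [lra| by rewrite shift0].
    have Hall : forall t, t0 < t -> in_image a (shift w t).
      move=> t Ht. apply: NNPP => N. have : t <= t0 by apply Hlub.1; split => //; lra. lra.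
    have Hy0 := closed_img Hc Hr t00 Hall.
    have Hnear : nearest_anc_in_image a w (shift w t0).
      split; first exact: shift_succ. split => // z Hz Hzw.
      have Hzh := succ_h Hzw.
      have Ez : shift w (pt_h z - pt_h w) = z by apply: shift_eq => //; lra.
      apply: succ_comp (shift_succ w t00) Hzw _. rewrite shift_h //.
      apply: NNPP => /Rnot_le_lt L.
      have [b [[b0 Hbn] Hb']] := lub_approx (s := pt_h z - pt_h w) Hlub ltac:(lra).
      apply: Hbn. apply: (up_closed Hc Hr (t := pt_h z - pt_h w)); [lra|lra|by rewrite Ez].
    have := Hcl w Hw _ Hnear. rewrite /height shift_h // Rabs_pos_eq; last lra.
    move=> H. exists (shift w t0); split => //; split; [exact: shift_succ| rewrite shift_h //; lra].
Qed.
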